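(* There is an absolute constant $C$ such that the following holds for all positive integers $n$. Let $w=\lfloor0.4n\rfloor$, and let integers $i\ne j$ and $k=i+j$ satisfy $|i|,|j|\le2w$ and $|k|\le w$. Then $R_i\cup R_j\cup L_k$ Schur embeds into $\{1,3,4\}\times\{0,1,\dots,\lfloor0.15n\rfloor+C\}$.
   Context: $R=\{(x,y)\in\mathbb{R}^2:0.7n\le x+y\le n,\ |x-y|\le0.8n\}$, $L=\{(x,y)\in\mathbb{R}^2:2\lceil0.7n\rceil\le x+y\le1.7n,\ |x-y|\le0.4n\}$. Fibers: $R_j=\{(x,y)\in\mathbb{Z}^2\cap R:x-y=j\}$ for $|j|\le 2w$ and $L_k=\{(x,y)\in\mathbb{Z}^2\cap L:x-y=k\}$ for $|k|\le w$. A set $X_1\subset\mathbb{Z}^2$ Schur embeds into $X_2\subset\mathbb{Z}^2$ if there is an injection $f:X_1\to X_2$ such that for all $a,b,c\in X_1$, $a+b=c$ if and only if $f(a)+f(b)=f(c)$ (coordinatewise addition). *)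

(* Defs.v *)
From mathcomp Require Import all_boot all_order all_algebra.
Set Implicit Arguments. Unset Strict Implicit. Unset Printing Implicit Defensive.
Import Order.TTheory GRing.Theory Num.Theory.
Local Open Scope ring_scope.

Definition pt := (int * int)%type.
Definition addpt (a b : pt) : pt := (a.1 + b.1, a.2 + b.2).

(* Real (here exact rational) constraints, with n%:Q the integer n. *)
Definition Q (z : int) : rat := z%:~R.

Definition inR (n : nat) (p : pt) : Prop :=
  (7/10) * n%:R <= Q (p.1 + p.2) /\ Q (p.1 + p.2) <= n%:R /\
  Q `|p.1 - p.2| <= (8/10) * n%:R.

Definition inL (n : nat) (p : pt) : Prop :=
  2 * Num.ceil ((7/10 : rat) * n%:R) <= p.1 + p.2 /\
  Q (p.1 + p.2) <= (17/10) * n%:R /\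
  Q `|p.1 - p.2| <= (4/10) * n%:R.

Definition Rfib (n : nat) (j : int) (p : pt) : Prop := inR n p /\ p.1 - p.2 = j.
Definition Lfib (n : nat) (k : int) (p : pt) : Prop := inL n p /\ p.1 - p.2 = k.

Definition wpar (n : nat) : int := Num.floor ((4/10 : rat) * n%:R).

Definition schur_embeds (X1 X2 : pt -> Prop) : Prop :=
  exists f : pt -> pt,
    (forall a, X1 a -> X2 (f a)) /\
    (forall a b, X1 a -> X1 b -> f a = f b -> a = b) /\
    (forall a b c, X1 a -> X1 b -> X1 c ->
       (addpt a b = c <-> addpt (f a) (f b) = f c)).

Definition target (n C : nat) (p : pt) : Prop :=
  (p.1 = 1 \/ p.1 = 3 \/ p.1 = 4) /\
  0 <= p.2 <= Num.floor ((15/100 : rat) * n%:R) + C%:Z.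

(* Main.v *)
Require Import Defs.
From mathcomp Require Import all_boot all_order all_algebra zify ring lra.
Import Order.TTheory GRing.Theory Num.Theory.
Local Open Scope ring_scope.

Lemma castn (n : nat) : (n%:R : rat) = (n%:Z)%:~R. Proof. by []. Qed.

Lemma fle (c d : nat) (n : nat) (z : int) : (0 < d)%N ->
  ((c%:R / d%:R) * n%:R <= (z%:~R : rat)) = ((c * n)%:Z <= d%:Z * z).
Proof.
move=> hd.
rewrite mulrAC ler_pdivrMr ?ltr0n // -natrM.
by rewrite -[(c*n)%:R]/(((c*n)%:Z)%:~R : rat) -[d%:R]/((d%:Z)%:~R : rat) mulrC -rmorphM ler_int.
Qed.
Lemma fge (c d : nat) (n : nat) (z : int) : (0 < d)%N ->
  ((z%:~R : rat) <= (c%:R / d%:R) * n%:R) = (d%:Z * z <= (c * n)%:Z).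
Proof.
move=> hd.
rewrite mulrAC ler_pdivlMr ?ltr0n // -natrM.
by rewrite -[(c*n)%:R]/(((c*n)%:Z)%:~R : rat) -[d%:R]/((d%:Z)%:~R : rat) mulrC -rmorphM ler_int.
Qed.
Lemma flt (c d : nat) (n : nat) (z : int) : (0 < d)%N ->
  ((z%:~R : rat) < (c%:R / d%:R) * n%:R) = (d%:Z * z < (c * n)%:Z).
Proof.
move=> hd.
rewrite mulrAC ltr_pdivlMr ?ltr0n // -natrM.
by rewrite -[(c*n)%:R]/(((c*n)%:Z)%:~R : rat) -[d%:R]/((d%:Z)%:~R : rat) mulrC -rmorphM ltr_int.
Qed.
Lemma fgt (c d : nat) (n : nat) (z : int) : (0 < d)%N ->
  ((c%:R / d%:R) * n%:R < (z%:~R : rat)) = ((c * n)%:Z < d%:Z * z).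
Proof.
move=> hd.
rewrite mulrAC ltr_pdivrMr ?ltr0n // -natrM.
by rewrite -[(c*n)%:R]/(((c*n)%:Z)%:~R : rat) -[d%:R]/((d%:Z)%:~R : rat) mulrC -rmorphM ltr_int.
Qed.
Lemma nle (n : nat) (z : int) : ((z%:~R : rat) <= n%:R) = (z <= n%:Z).
Proof. by rewrite castn ler_int. Qed.



Lemma ceilI (c d n : nat) : (0 < d)%N -> let c0 := Num.ceil ((c%:R / d%:R : rat) * n%:R) in
  (c * n)%:Z <= d%:Z * c0 /\ d%:Z * (c0 - 1) < (c*n)%:Z.
Proof.
move=> hd c0; have /andP[h1 h2] := ceil_itv ((c%:R / d%:R : rat) * n%:R).
by rewrite -fle // -flt.
Qed.
Lemma floorI (c d n : nat) : (0 < d)%N -> let c0 := Num.floor ((c%:R / d%:R : rat) * n%:R) in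
  d%:Z * c0 <= (c * n)%:Z /\ (c * n)%:Z < d%:Z * (c0 + 1).
Proof.
move=> hd c0; have /andP[h1 h2] := floor_itv ((c%:R / d%:R : rat) * n%:R).
by rewrite -fge // -fgt.
Qed.

Lemma RfibI n i p : Rfib n i p ->
  (7 * n)%:Z <= 10%:Z * (p.1 + p.2) /\ p.1 + p.2 <= n%:Z /\ p.1 - p.2 = i.
Proof.
case=> [[h1 [h2 _]] h3]; split; last split=> //.
  by move: h1; rewrite /Q fle.
by move: h2; rewrite /Q nle.
Qed.

Lemma LfibI n k p : Lfib n k p ->
  2 * Num.ceil ((7/10 : rat) * n%:R) <= p.1 + p.2 /\
  10%:Z * (p.1 + p.2) <= (17 * n)%:Z /\ p.1 - p.2 = k.
Proof.
case=> [[h1 [h2 _]] h3]; split=> //; split=> //.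
by move: h2; rewrite /Q fge.
Qed.

Lemma pair_eq (a b c d : int) : ((a, b) = (c, d) :> pt) <-> a = c /\ b = d.
Proof. by split=> [[-> ->]|[-> ->]]. Qed.

Lemma half_bounds (a : int) : 2 * (a %/ 2)%Z <= a /\ a - 1 <= 2 * (a %/ 2)%Z.
Proof. split; lia. Qed.

Lemma core (n : nat) (i j : int) : (0 < n)%N -> i <> j ->
    schur_embeds
      (fun p => Rfib n i p \/ Rfib n j p \/ Lfib n (i + j) p)
      (target n 2).
Proof.
move=> n0 ij.
rewrite /target.
move: (@LfibI n (i + j)).
set c0 := Num.ceil ((7/10 : rat) * n%:R).
move=> LI.
have [hc1 hc2] := ceilI 7 10 n erefl.
rewrite -/c0 in hc1 hc2.
set F := Num.floor ((15/100 : rat) * n%:R).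
have [hF1 hF2] := floorI 15 100 n erefl.
rewrite -/F in hF1 hF2.
clearbody c0 F.
have ha := half_bounds (c0 + i).
have hb := half_bounds (c0 + j).
move: ha hb; set a0 := ((c0 + i) %/ 2)%Z; set b0 := ((c0 + j) %/ 2)%Z.
move=> [ha1 ha2] [hb1 hb2].
clearbody a0 b0.
pose f (p : pt) : pt := if p.1 + p.2 <= n%:Z then
   (if p.1 - p.2 == i then (1, p.1 - a0) else (3, p.1 - b0))
   else (4, p.1 - a0 - b0).
have cl : forall p, Rfib n i p \/ Rfib n j p \/ Lfib n (i + j) p ->
   [/\ (7 * n)%:Z <= 10%:Z * (p.1 + p.2), p.1 + p.2 <= n%:Z, p.1 - p.2 = i &
       f p = (1, p.1 - a0)] \/
   [/\ (7 * n)%:Z <= 10%:Z * (p.1 + p.2), p.1 + p.2 <= n%:Z, p.1 - p.2 = j &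
       f p = (3, p.1 - b0)] \/
   [/\ 2 * c0 <= p.1 + p.2, 10%:Z * (p.1 + p.2) <= (17 * n)%:Z, p.1 - p.2 = i + j &
       f p = (4, p.1 - a0 - b0)].
  move=> p [/RfibI [h1 [h2 h3]]|[/RfibI [h1 [h2 h3]]|/LI [h1 [h2 h3]]]].
  - by left; split=> //; rewrite /f h2 h3 eqxx.
  - right; left; split=> //; rewrite /f h2 h3.
    by have -> : (j == i) = false by apply/eqP => e; apply: ij.
  - right; right; split=> //; rewrite /f.
    have -> : (p.1 + p.2 <= n%:Z) = false by apply/negbTE; rewrite -ltNge; lia.
    by [].
exists f; split; last split.
- move=> [x y] /cl /= [[h1 h2 h3 ->]|[[h1 h2 h3 ->]|[h1 h2 h3 ->]]];
    rewrite /=; split; try tauto; apply/andP; split; lia.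
- move=> [x1 y1] [x2 y2] /cl /= A /cl /= B.
  case: A => [[h1 h2 h3 ->]|[[h1 h2 h3 ->]|[h1 h2 h3 ->]]];
  case: B => [[g1 g2 g3 ->]|[[g1 g2 g3 ->]|[g1 g2 g3 ->]]];
  move/pair_eq=> [e1 e2]; apply/pair_eq; lia.
- move=> [x1 y1] [x2 y2] [x3 y3] /cl /= A /cl /= B /cl /= C.
  rewrite /addpt /=.
  case: A => [[h1 h2 h3 ->]|[[h1 h2 h3 ->]|[h1 h2 h3 ->]]];
  case: B => [[g1 g2 g3 ->]|[[g1 g2 g3 ->]|[g1 g2 g3 ->]]];
  case: C => [[k1 k2 k3 ->]|[[k1 k2 k3 ->]|[k1 k2 k3 ->]]];
  rewrite /= !pair_eq; split=> -[e1 e2]; lia.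
Qed.

Theorem mainTheorem8 :
  exists C : nat, forall n : nat, (0 < n)%N ->
    forall i j : int, i != j ->
    `|i| <= 2 * wpar n -> `|j| <= 2 * wpar n -> `|i + j| <= wpar n ->
    schur_embeds
      (fun p => Rfib n i p \/ Rfib n j p \/ Lfib n (i + j) p)
      (target n C).
Proof.
exists 2%N => n n0 i j /eqP ij _ _ _.
exact: core.
Qed.
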